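(* Let $V$ be a real vector space of dimension $d$, and $G$ a group of affine-linear transformations of $V$ including all translations. Then: (1) $\mathcal{CB}_0(V,G)$ is a copy of $\mathbb{Z}$ generated by the class $[p]$ of any one-point convex body $p$. (2) For $i>0$, each $\mathcal{CB}_i(V,G)$ admits the structure of a Hausdorff topological vector space over $\mathbb{R}$, extending its structure as a topological abelian group, and with respect to this vector space structure the valuation $\Phi_i\colon\mathcal{K}(V)\to\mathcal{CB}_i(V,G)$ is homogeneous of degree $i$, i.e.\ $\Phi_i(\lambda X)=\lambda^i\Phi_i(X)$ for $\lambda\in[0,\infty)$, $X\in\mathcal{K}(V)$.
   Context: $\mathcal{K}(V)$ is the set of nonempty compact convex subsets of $V$ with the Hausdorff metric topology. $\mathcal{CB}(V,G)$ is the quotient (with quotient topology) of the free Hausdorff topological abelian group $\mathbb{Z}\mathcal{K}(V)$ on $\mathcal{K}(V)$ (the Hausdorff topological abelian group with continuous map $X\mapsto[X]$ through which every continuous map from $\mathcal{K}(V)$ to a Hausdorff topological abelian group factors uniquely via a continuous homomorphism) by the closure of the subgroup generated by all $[B\cup C]-[B]-[C]+[B\cap C]$ ($B,C,B\cup C\in\mathcal{K}(V)$) and all $[X]-[gX]$ ($g\in G$); images are still written $[X]$, and $\Phi(X)=[X]$. The dilation map $D\colon[0,\infty)\times\mathcal{CB}(V,G)\to\mathcal{CB}(V,G)$ is the unique continuous map that is a homomorphism in its second variable with $D(\lambda,[X])=[\lambda X]$. The dilation components are the uniquely determined continuous maps $\rho_0\colon\mathcal{CB}(V,G)\to\mathcal{CB}(V,G)$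 and $\rho_1,\ldots,\rho_d\colon[0,\infty)\times\mathcal{CB}(V,G)\to\mathcal{CB}(V,G)$ such that each $\rho_i(-,x)$ ($i\geqslant1$) is a semigroup homomorphism on $([0,\infty),+)$ and $D(\lambda,x)=\rho_0(x)+\sum_{i=1}^d\rho_i(\lambda^i,x)$. The McMullen idempotents are $e_0=\rho_0$ and $e_i(x)=\rho_i(1,x)$ for $i=1,\ldots,d$; they are continuous homomorphisms with $e_0+\cdots+e_d=\mathrm{id}$, $e_i^2=e_i$, $e_ie_j=0$ for $i\neq j$. Set $\mathcal{CB}_i(V,G)=e_i(\mathcal{CB}(V,G))$ (subspace topology), so $\mathcal{CB}(V,G)=\bigoplus_i\mathcal{CB}_i(V,G)$, and $\Phi_i=e_i\circ\Phi\colon\mathcal{K}(V)\to\mathcal{CB}_i(V,G)$. *)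

(* Defs.v *)
From HB Require Import structures.
From mathcomp Require Import all_boot all_order all_algebra.
From mathcomp Require Import all_classical all_reals all_analysis.
Set Implicit Arguments. Unset Strict Implicit. Unset Printing Implicit Defensive.
Import Order.TTheory GRing.Theory Num.Theory.
Import numFieldNormedType.Exports.
Local Open Scope classical_set_scope.
Local Open Scope ring_scope.

Section CB.
Variables (R : realType) (d : nat).
Local Notation V := 'rV[R]_d.

Definition is_convex_body (X : set V) : Prop :=
  X !=set0 /\ compact X /\ @convex_set R V X.

Definition Kbody := {X : set V | is_convex_body X}.

(* Hausdorff distance (for nonempty bounded sets) *)
Definition hdist (X Y : set V) : R :=
  Num.max (sup [set inf [set `|x - y| | y in Y] | x in X])
          (sup [set inf [set `|x - y| | x in X] | y in Y]).

Definition Kcontinuous (T : topologicalType) (f : Kbody -> T) : Prop :=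
  forall (X : Kbody) (U : set T), nbhs (f X) U ->
    exists2 e : R, 0 < e & forall Y : Kbody, hdist (sval X) (sval Y) < e -> U (f Y).

Definition affine_linear (g : V -> V) : Prop :=
  exists2 M : 'M[R]_d, M \in unitmx & exists b : V, forall x, g x = x *m M + b.

Definition affine_group_with_translations (G : set (V -> V)) : Prop :=
  [/\ forall g, G g -> affine_linear g,
      G id,
      forall g h, G g -> G h -> G (g \o h),
      forall g, G g -> exists2 h, G h & (h \o g = id /\ g \o h = id)
    & forall b : V, G (fun x => x + b)].

Definition free_hausdorff_group (F : topologicalZmodType) (iota : Kbody -> F) : Prop :=
  [/\ hausdorff_space F, Kcontinuous iota &
    forall (H : topologicalZmodType), hausdorff_space H ->
    forall f : Kbody -> H, Kcontinuous f ->
    exists g : F -> H,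
      ((forall x y, g (x - y) = g x - g y) /\ continuous g /\ g \o iota = f) /\
      forall g' : F -> H,
        ((forall x y, g' (x - y) = g' x - g' y) /\ continuous g' /\ g' \o iota = f) ->
        g' = g].

Definition gen_subgroup (F : zmodType) (S : set F) : set F :=
  [set x | forall T : set F, T 0 -> (forall a b, T a -> T b -> T (a - b)) ->
             S `<=` T -> T x].

Definition CB_relations (G : set (V -> V)) (F : zmodType) (iota : Kbody -> F) : set F :=
  [set x | (exists B C U I : Kbody,
               [/\ sval U = sval B `|` sval C, sval I = sval B `&` sval C &
                   x = iota U - iota B - iota C + iota I])
        \/ (exists (g : V -> V) (X Y : Kbody),
               [/\ G g, sval Y = g @` sval X & x = iota X - iota Y])].

Definition CB_quotient (G : set (V -> V)) (F : topologicalZmodType) (iota : Kbody -> F)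
    (A : topologicalZmodType) (q : F -> A) : Prop :=
  [/\ forall x y, q (x - y) = q x - q y,
      forall a : A, exists x, q x = a,
      (forall U : set A, open U <-> open (q @^-1` U)) &
      q @^-1` [set 0] = closure (gen_subgroup (CB_relations G iota))].

Definition is_dilation (A : topologicalZmodType) (Phi : Kbody -> A) (D : R -> A -> A) : Prop :=
  [/\ {within [set p : R * A | 0 <= p.1], continuous (fun p : R * A => D p.1 p.2)},
      forall lam x y, 0 <= lam -> D lam (x - y) = D lam x - D lam y &
      forall lam (X Y : Kbody), 0 <= lam -> sval Y = (fun v => lam *: v) @` sval X ->
        D lam (Phi X) = Phi Y].

Definition dilation_components (A : topologicalZmodType) (D : R -> A -> A)
    (rho0 : A -> A) (rho : nat -> R -> A -> A) : Prop :=
  [/\ continuous rho0,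
      forall i, (1 <= i <= d)%N ->
        {within [set p : R * A | 0 <= p.1], continuous (fun p : R * A => rho i p.1 p.2)},
      forall i, (1 <= i <= d)%N -> forall s t x, 0 <= s -> 0 <= t ->
        rho i (s + t) x = rho i s x + rho i t x &
      forall lam x, 0 <= lam ->
        D lam x = rho0 x + \sum_(1 <= i < d.+1) rho i (lam ^+ i) x].

Definition mcmullen (A : topologicalZmodType) (rho0 : A -> A) (rho : nat -> R -> A -> A)
    (i : nat) (x : A) : A :=
  if i == 0%N then rho0 x else rho i 1 x.

Definition CBi (A : topologicalZmodType) (rho0 : A -> A) (rho : nat -> R -> A -> A)
    (i : nat) : set A := range (mcmullen rho0 rho i).

Definition hausdorff_tvs_on (A : topologicalZmodType) (T : set A) (s : R -> A -> A) : Prop :=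
  [/\ (forall a x, T x -> T (s a x)) /\
      (forall a b x, T x -> s a (s b x) = s (a * b) x),
      (forall x, T x -> s 1 x = x) /\
      (forall a x y, T x -> T y -> s a (x + y) = s a x + s a y),
      forall a b x, T x -> s (a + b) x = s a x + s b x,
      ({within [set p : R * A | T p.2], continuous (fun p : R * A => s p.1 p.2)}) &
      forall x y, T x -> T y -> x <> y ->
        exists U W : set A, [/\ open U, open W, U x, W y & U `&` W = set0]].

End CB.

(* Main.v *)
Require Import Defs.
From HB Require Import structures.
From mathcomp Require Import all_boot all_order all_algebra.
From mathcomp Require Import all_classical all_reals all_analysis.
From mathcomp Require Import lra.
Set Implicit Arguments. Unset Strict Implicit. Unset Printing Implicit Defensive.
Import Order.TTheory GRing.Theory Num.Theory.
Import numFieldNormedType.Exports.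
Local Open Scope classical_set_scope.
Local Open Scope ring_scope.


Section AddFun.
Variables (M N : zmodType) (f : M -> N).
Hypothesis fB : forall x y, f (x - y) = f x - f y.
Lemma af0 : f 0 = 0.
Proof. by have := fB 0 0; rewrite subr0 => h; rewrite h subrr. Qed.
Lemma afN x : f (- x) = - f x.
Proof. by rewrite -sub0r fB af0 sub0r. Qed.
Lemma afD x y : f (x + y) = f x + f y.
Proof. by have := fB x (- y); rewrite opprK => ->; rewrite afN opprK. Qed.
Lemma afMn x n : f (x *+ n) = f x *+ n.
Proof. by elim: n => [|n IH]; rewrite ?mulr0n ?af0 // !mulrS afD IH. Qed.
Lemma afMz x n : f (x *~ n) = f x *~ n.
Proof. case: n => n; first exact: afMn. by rewrite !NegzE !mulrNz afN; congr (- _); exact: afMn. Qed.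
Lemma afsum (I : Type) (r : seq I) (P : pred I) (F : I -> M) :
  f (\sum_(i <- r | P i) F i) = \sum_(i <- r | P i) f (F i).
Proof. exact: (big_morph f afD af0). Qed.
End AddFun.

Section Poly.
Variables (R : realType) (M : zmodType).

Definition sadd (g : R -> M) := forall s t, 0 <= s -> 0 <= t -> g (s + t) = g s + g t.

Lemma sadd0 g : sadd g -> g 0 = 0.
Proof.
move=> h; have e := h 0 0 (lexx _) (lexx _); rewrite addr0 in e.
by apply: (addrI (g 0)); rewrite addr0 -e.
Qed.

Lemma saddMn g s n : sadd g -> 0 <= s -> g (s *+ n) = g s *+ n.
Proof.
move=> h s0; elim: n => [|n IH]; first by rewrite !mulr0n sadd0.
by rewrite !mulrS h ?IH ?mulrn_wge0.
Qed.

Lemma rootex (n : nat) (t : R) : 0 <= t -> exists l : R, 0 <= l /\ l ^+ n.+1 = t.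
Proof.
move=> t0; exists (t `^ (n.+1%:R^-1)); split; first exact: powR_ge0.
by rewrite -powR_mulrn ?powR_ge0 // -powRrM mulVf ?pnatr_eq0 // powRr1.
Qed.

Lemma poly_uniq (n : nat) (c : M) (f : nat -> R -> M) :
  (forall i, (1 <= i <= n)%N -> sadd (f i)) ->
  (forall lam, 0 <= lam -> c + \sum_(1 <= i < n.+1) f i (lam ^+ i) = 0) ->
  c = 0 /\ forall i, (1 <= i <= n)%N -> forall t, 0 <= t -> f i t = 0.
Proof.
elim: n c f => [|n IH] c f hadd hsum.
  split; last by move=> i /andP[/leq_trans h /h].
  by have := hsum 0 (lexx _); rewrite big_geq // addr0.
have c0 : c = 0.
  have := hsum 0 (lexx _); rewrite big_nat big1 ?addr0 // => i /andP[i1 iN].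
  rewrite expr0n; case: i i1 iN => //= i _ iN; apply: sadd0; apply: hadd.
  by rewrite ltnS /= -ltnS.
subst c; split => //.
have H : forall lam, 0 <= lam -> \sum_(1 <= i < n.+2) f i (lam ^+ i) = 0.
  by move=> lam l0; have := hsum lam l0; rewrite add0r.
pose g i s := f i s *+ (2 ^ n.+1 - 2 ^ i)%N.
have gadd : forall i, (1 <= i <= n)%N -> sadd (g i).
  move=> i /andP[i1 iN] s t s0 t0; rewrite /g hadd ?i1 ?(leq_trans iN) //.
  by rewrite mulrnDl.
have gsum : forall lam, 0 <= lam -> 0 + \sum_(1 <= i < n.+1) g i (lam ^+ i) = 0.
  move=> lam l0; rewrite add0r.
  have -> : \sum_(1 <= i < n.+1) g i (lam ^+ i) =
            \sum_(1 <= i < n.+2) f i (lam ^+ i) *+ (2 ^ n.+1 - 2 ^ i)%N.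
    by rewrite [RHS]big_nat_recr //= subnn mulr0n addr0.
  have -> : \sum_(1 <= i < n.+2) f i (lam ^+ i) *+ (2 ^ n.+1 - 2 ^ i)%N =
     \sum_(1 <= i < n.+2) f i (lam ^+ i) *+ 2 ^ n.+1 -
     \sum_(1 <= i < n.+2) f i ((2 * lam) ^+ i).
    rewrite -sumrB; apply: eq_big_nat => i /andP[i1 iN].
    have hi : (2 ^ i <= 2 ^ n.+1)%N by rewrite leq_exp2l.
    rewrite mulrnBr //.
    rewrite exprMn -natrX mulrC -mulr_natr -[in RHS]mulr_natr.
    congr (_ - _); rewrite !mulr_natr saddMn ?exprn_ge0 //.
    by apply: hadd; rewrite i1 -ltnS.
  have h1 := H lam l0; have h2 := H (2 * lam) (mulr_ge0 (ler0n _ 2) l0).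
  rewrite sumrMnl; apply/eqP; rewrite subr_eq0; apply/eqP.
  by transitivity (0 : M); [move: h1 => /= ->; rewrite mul0rn| move: h2 => /= ->].
have [_ gi0] := IH 0 g gadd gsum.
have fi0 : forall i, (1 <= i <= n)%N -> forall t, 0 <= t -> f i t = 0.
  move=> i hi t t0; set m := (2 ^ n.+1 - 2 ^ i)%N.
  have m0 : (0 < m)%N.
    rewrite subn_gt0 ltn_exp2l //; by case/andP: hi.
  have -> : t = (t / m%:R) *+ m by rewrite -mulr_natr mulfVK // pnatr_eq0 -lt0n.
  rewrite saddMn ?divr_ge0 //; last by apply: hadd; case/andP: hi => -> /leqW.
  by apply: gi0 => //; rewrite divr_ge0.
move=> i /andP[i1]; rewrite leq_eqVlt => /orP[/eqP -> t t0|iN t t0]; last first.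
  by apply: fi0 => //; rewrite i1 -ltnS.
have [l [l0 <-]] := @rootex n t t0.
have := H l l0; rewrite big_nat_recr //= big_nat big1 ?add0r // => j /andP[j1 jn].
by apply: fi0; [rewrite j1 -ltnS | exact: exprn_ge0].
Qed.
End Poly.


Section Poly2.
Variables (R : realType) (M : zmodType).
Lemma poly_uniq2 (n : nat) (c1 c2 : M) (f1 f2 : nat -> R -> M) :
  (forall i, (1 <= i <= n)%N -> sadd (f1 i)) ->
  (forall i, (1 <= i <= n)%N -> sadd (f2 i)) ->
  (forall lam, 0 <= lam -> c1 + \sum_(1 <= i < n.+1) f1 i (lam ^+ i) =
                           c2 + \sum_(1 <= i < n.+1) f2 i (lam ^+ i)) ->
  c1 = c2 /\ forall i, (1 <= i <= n)%N -> forall t, 0 <= t -> f1 i t = f2 i t.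
Proof.
move=> h1 h2 he.
have H1 : forall i, (1 <= i <= n)%N -> sadd (fun s => f1 i s - f2 i s).
  by move=> i hi s t s0 t0 /=; rewrite h1 // h2 // opprD addrACA.
have H2 : forall lam, 0 <= lam -> (c1 - c2) +
    \sum_(1 <= i < n.+1) (fun i s => f1 i s - f2 i s) i (lam ^+ i) = 0.
  by move=> lam l0; rewrite sumrB addrACA -opprD he // subrr.
have [c0 f0] := poly_uniq H1 H2.
split; first by apply/eqP; rewrite -subr_eq0 c0.
by move=> i hi t t0; apply/eqP; rewrite -subr_eq0 f0.
Qed.
End Poly2.

Section Alg.
Variables (R : realType) (d : nat) (A : zmodType) (D : R -> A -> A)
  (rho0 : A -> A) (rho : nat -> R -> A -> A).
Hypothesis hadd : forall i, (1 <= i <= d)%N -> forall s t x, 0 <= s -> 0 <= t ->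
  rho i (s + t) x = rho i s x + rho i t x.
Hypothesis hdec : forall lam x, 0 <= lam ->
  D lam x = rho0 x + \sum_(1 <= i < d.+1) rho i (lam ^+ i) x.
Hypothesis hDB : forall lam x y, 0 <= lam -> D lam (x - y) = D lam x - D lam y.

Lemma rho_sadd i x : (1 <= i <= d)%N -> sadd (fun s => rho i s x).
Proof. by move=> hi s t s0 t0; apply: hadd. Qed.

Lemma rho_at0 i x : (1 <= i <= d)%N -> rho i 0 x = 0.
Proof. by move=> hi; apply: (sadd0 (rho_sadd x hi)). Qed.

Lemma rho0E x : rho0 x = D 0 x.
Proof.
rewrite hdec // big_nat big1 ?addr0 // => i /andP[i1 iN].
by rewrite expr0n; case: i i1 iN => //= i _ iN; rewrite rho_at0.
Qed.

Lemma rho0B x y : rho0 (x - y) = rho0 x - rho0 y.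
Proof. by rewrite !rho0E hDB. Qed.

Lemma rhoB i s x y : (1 <= i <= d)%N -> 0 <= s ->
  rho i s (x - y) = rho i s x - rho i s y.
Proof.
move=> hi s0.
apply: (proj2 (@poly_uniq2 R A d (rho0 (x - y)) (rho0 x - rho0 y)
   (fun i s => rho i s (x - y)) (fun i s => rho i s x - rho i s y) _ _ _) i hi s s0).
- by move=> j hj; apply: rho_sadd.
- by move=> j hj s1 t1 s1' t1' /=; rewrite !hadd // opprD addrACA.
- by move=> lam l0; rewrite -hdec // hDB // !hdec // sumrB opprD addrACA.
Qed.

Lemma rhoD i s x y : (1 <= i <= d)%N -> 0 <= s ->
  rho i s (x + y) = rho i s x + rho i s y.
Proof. by move=> hi s0; apply: afD; move=> a b; apply: rhoB. Qed.

Hypothesis hDD : forall lam mu x, 0 <= lam -> 0 <= mu ->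
  D lam (D mu x) = D (lam * mu) x.

Lemma rho_D i s mu x : (1 <= i <= d)%N -> 0 <= s -> 0 <= mu ->
  rho i s (D mu x) = rho i (s * mu ^+ i) x.
Proof.
move=> hi s0 m0.
apply: (proj2 (@poly_uniq2 R A d (rho0 (D mu x)) (rho0 x)
   (fun i s => rho i s (D mu x)) (fun i s => rho i (s * mu ^+ i) x) _ _ _) i hi s s0).
- by move=> j hj; apply: rho_sadd.
- move=> j hj s1 t1 s1' t1' /=; rewrite mulrDl hadd //.
    by rewrite mulr_ge0 ?exprn_ge0.
  by rewrite mulr_ge0 ?exprn_ge0.
- move=> lam l0; rewrite -hdec // hDD // hdec ?mulr_ge0 //.
  by congr (_ + _); apply: eq_bigr => j _; rewrite exprMn.
Qed.

Lemma rho_rho i j s t x : (1 <= i <= d)%N -> (1 <= j <= d)%N -> 0 <= s -> 0 <= t ->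
  rho i s (rho j t x) = if j == i then rho i (s * t) x else 0.
Proof.
move=> hi hj s0 t0.
have rs := fun a b => rhoB a b hi s0.
apply: (proj2 (@poly_uniq2 R A d (rho i s (rho0 x)) 0
   (fun j t => rho i s (rho j t x))
   (fun j t => if j == i then rho i (s * t) x else 0) _ _ _) j hj t t0).
- by move=> k hk s1 t1 s1p t1p /=; rewrite hadd // (afD rs).
- move=> k hk s1 t1 s1' t1' /=; case: eqP => [_|_]; last by rewrite addr0.
  by rewrite mulrDr hadd // mulr_ge0.
- move=> mu m0; transitivity (rho i s (D mu x)).
    by rewrite hdec // (afD rs) (afsum rs).
  rewrite rho_D // add0r.
  rewrite (bigD1_seq i) ?mem_index_iota ?ltnS ?iota_uniq //= eqxx.
  by rewrite big1 ?addr0 // => k /negbTE ->.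
Qed.

End Alg.


Lemma trans_cont (T : topologicalZmodType) (k : T) : continuous (fun y : T => y - k).
Proof.
move=> y; apply: (@continuous_comp _ _ _ (fun y => (y, k)) (fun p : T * T => p.1 - p.2)).
  by apply: cvg_pair; [exact: cvg_id | exact: cvg_cst].
exact: sub_continuous.
Qed.

Lemma ladd_cont (T : topologicalZmodType) (k : T) : continuous (fun y : T => k + y).
Proof.
move=> y; apply: (@continuous_comp _ _ _ (fun y => (k, y)) (fun p : T * T => p.1 + p.2)).
  by apply: cvg_pair; [exact: cvg_cst | exact: cvg_id].
exact: add_continuous.
Qed.

Lemma within_comp (T U W : topologicalType) (S : set T) (f : T -> W) (g : U -> T) :
  {within S, continuous f} -> continuous g -> (forall u, S (g u)) ->
  continuous (f \o g).
Proof.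
move=> hf hg hS u V nV.
have := hf (g u) V nV.
move=> h0.
have h : within S (nbhs (g u)) (f @^-1` V) by rewrite nbhs_subspace_in //.
have h3 : nbhs u [set v | S (g v) -> V (f (g v))] := hg u _ h.
change (nbhs u [set v | V (f (g v))]).
by apply: filterS h3 => v /= /(_ (hS v)).
Qed.

Section Topo.
Variables (R : realType) (d : nat) (G : set ('rV[R]_d -> 'rV[R]_d))
  (F : topologicalZmodType) (iota : Kbody R d -> F) (A : topologicalZmodType) (q : F -> A).
Hypothesis hF : free_hausdorff_group iota.
Hypothesis hq : CB_quotient G iota q.

Lemma q_cont : continuous q.
Proof. by case: hq => _ _ qo _; apply/continuousP => U oU; apply/qo. Qed.

Lemma q_open U : open U -> open (q @` U).
Proof.
case: hq => qB qs qo qk oU; apply/qo.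
rewrite openE => x [u Uu qux].
set k := x - u.
have hk : x - k = u by rewrite /k opprB addrC subrK.
have nU : nbhs (x - k) U by rewrite hk; apply: open_nbhs_nbhs; split.
have h3 : nbhs x [set y | U (y - k)] := @trans_cont _ k x U nU.
apply: filterS h3 => y /= Uy.
exists (y - k) => //.
have qk0 : q k = 0 by rewrite /k qB qux subrr.
by rewrite qB qk0 subr0.
Qed.

Lemma A_hausdorff : hausdorff_space A.
Proof.
rewrite open_hausdorff => x y xy.
case: hq => qB qs qo qk.
have [a qa] := qs x; have [b qb] := qs y.
set K := closure (gen_subgroup (CB_relations G iota)).
have Kab : ~ K (a - b).
  rewrite /K -qk /= qB qa qb => /eqP; rewrite subr_eq0 => /eqP exy.
  by move: xy; rewrite exy eqxx.
have oC : open (~` K) by rewrite openC; exact: closed_closure.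
pose h := fun p : F * F => (a + p.1) - (b + p.2).
have hc : continuous h.
  move=> p; apply: (@continuous_comp _ _ _ (fun p : F * F => (a + p.1, b + p.2))
    (fun p : F * F => p.1 - p.2)); last exact: sub_continuous.
  apply: cvg_pair.
    exact: (@continuous_comp _ _ _ fst (fun y => a + y) p cvg_fst (@ladd_cont _ a _)).
  exact: (@continuous_comp _ _ _ snd (fun y => b + y) p cvg_snd (@ladd_cont _ b _)).
have e0 : h (0, 0) = a - b by rewrite /h /= !addr0.
have nC : nbhs (h (0, 0)) (~` K) by rewrite e0; apply: open_nbhs_nbhs; split.
have [[P Q] [nP nQ] PQ] := hc (0, 0) _ nC.
move: nP; rewrite nbhsE; case=> O1 [oO1 O10] O1P.
move: nQ; rewrite nbhsE; case=> O2 [oO2 O20] O2Q.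
exists (q @` [set z | O1 (z - a)], q @` [set z | O2 (z - b)]).
  split; rewrite inE.
    by exists a; [rewrite /= subrr | exact: qa].
  by exists b; [rewrite /= subrr | exact: qb].
split.
- by apply: q_open; apply: (proj1 (continuousP _) (@trans_cont F a)).
- by apply: q_open; apply: (proj1 (continuousP _) (@trans_cont F b)).
apply/eqP; rewrite -subset0 => z [[z1 /= O1z1 <-] [z2 /= O2z2 e]].
have := PQ (z1 - a, z2 - b) (conj (O1P _ O1z1) (O2Q _ O2z2)).
rewrite /h /=. have -> : a + (z1 - a) - (b + (z2 - b)) = z1 - z2 by rewrite [a + _]addrC subrK [b + _]addrC subrK.
apply.
by rewrite /K -qk /= qB e subrr.
Qed.

Lemma hom_uniq (H : topologicalZmodType) : hausdorff_space H ->
  forall f1 f2 : A -> H,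
  (forall x y, f1 (x - y) = f1 x - f1 y) -> (forall x y, f2 (x - y) = f2 x - f2 y) ->
  continuous f1 -> continuous f2 ->
  (forall X, f1 (q (iota X)) = f2 (q (iota X))) -> forall a, f1 a = f2 a.
Proof.
move=> hH f1 f2 h1 h2 c1 c2 e a.
case: hF => _ iotac univ; case: hq => qB qs qo qk.
have qc := q_cont.
have kc : Kcontinuous (fun X => f1 (q (iota X))).
  move=> X U nU; apply: (iotac X (q @^-1` (f1 @^-1` U))).
  exact: (qc (iota X) _ (c1 (q (iota X)) U nU)).
have [g [_ uq]] := univ H hH _ kc.
have E1 : f1 \o q = g.
  apply: uq; split; first by move=> x y /=; rewrite qB h1.
  split => //; move=> x; apply: continuous_comp; [exact: qc | exact: c1].
have E2 : f2 \o q = g.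
  apply: uq; split; first by move=> x y /=; rewrite qB h2.
  split; first by move=> x; apply: continuous_comp; [exact: qc | exact: c2].
  by apply: funext => X /=; rewrite e.
have [x <-] := qs a.
by have := congr1 (fun g => g x) (etrans E1 (esym E2)).
Qed.

End Topo.

Local Open Scope convex_scope.



Lemma scale_body (R : realType) (d : nat) (lam : R) (X : Kbody R d) :
  {Y : Kbody R d | sval Y = (fun v => lam *: v) @` sval X}.
Proof.
case: X => X hX /=.
have hY : is_convex_body ((fun v : 'rV[R]_d => lam *: v) @` X).
  case: hX => [[x Xx] [cX vX]].
  split; first by exists (lam *: x); exists x.
  split.
    pose f : 'rV[R]_d -> 'rV[R]_d := fun v => lam *: v.
    change (compact (f @` X)).
    apply: continuous_compact cX; apply: continuous_subspaceT.
    by move=> v; apply: continuousZl_tmp; exact: cvg_id.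
  move=> a b t /set_mem [a' Xa' <-] /set_mem [b' Xb' <-]; apply/mem_set.
  exists ((a' : convex_lmodType 'rV[R]_d) <| t |> b'); first by apply/set_mem; apply: vX; apply/mem_set.
  by rewrite /conv /= scalerDr !scalerA (mulrC lam) (mulrC lam).
by exists (exist _ _ hY).
Qed.

Notation zd := (discrete_topology int).
HB.instance Definition _ := GRing.Zmodule.on zd.

Lemma zd_sub : continuous (fun x : zd * zd => x.1 - x.2).
Proof.
move=> [a b] V nV.
exists ([set a], [set b]); first by split; exact: discrete_set1.
by move=> [x y] [/= -> ->]; exact: nbhs_singleton nV.
Qed.

HB.instance Definition _ :=
  PreTopologicalNmodule_isTopologicalZmodule.Build zd zd_sub.

Lemma zd_hausdorff : hausdorff_space zd.
Proof. exact: discrete_hausdorff. Qed.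

Lemma zd_cont (T : topologicalType) (f : zd -> T) : continuous f.
Proof.
move=> n V nV.
apply: (@filterS _ (nbhs n) _ [set n]); last exact: discrete_set1.
by move=> m /= ->; exact: nbhs_singleton nV.
Qed.

Section PosNeg.
Variable R : realType.
Definition pp (a : R) := Num.max a 0.
Definition nn (a : R) := Num.max (- a) 0.
Lemma pp_ge0 a : 0 <= pp a. Proof. by rewrite /pp le_max lexx orbT. Qed.
Lemma nn_ge0 a : 0 <= nn a. Proof. by rewrite /nn le_max lexx orbT. Qed.
Lemma ppnn a : pp a - nn a = a.
Proof.
rewrite /pp /nn; case: (leP 0 a) => a0.
  by rewrite (max_idPr _) ?subr0 // oppr_le0.
by rewrite (max_idPl _) ?sub0r ?opprK // oppr_ge0 ltW.
Qed.
Lemma pp_id a : 0 <= a -> pp a = a. Proof. by move=> a0; rewrite /pp (max_idPl a0). Qed.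
Lemma nn_0 a : 0 <= a -> nn a = 0. Proof. by move=> a0; rewrite /nn (max_idPr _) // oppr_le0. Qed.
Lemma pp_cont : continuous pp.
Proof.
move=> x; apply: (@continuous_max R R (fun a => a) (fun _ => 0) x).
  exact: cvg_id.
exact: cvg_cst.
Qed.
Lemma nn_cont : continuous nn.
Proof.
move=> x; apply: (@continuous_comp _ _ _ (fun a : R => - a) pp).
  exact: opp_continuous.
exact: pp_cont.
Qed.
End PosNeg.

Section ZmodId.
Variable M : zmodType.
Lemma zm_i (P Q S T U V : M) : U + Q + S = P + T + V -> (P - Q) - (S - T) = U - V.
Proof.
move=> e; have -> : U = P + T + V - S - Q by rewrite -e !addrK.
by rewrite [RHS](ACl (1*5*2*4*3*6)) /= addrK opprB addrA.
Qed.
Lemma zm_ii (P Q S T U V : M) : U + Q + T = V + P + S -> U - V = (P - Q) + (S - T).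
Proof.
move=> e; have -> : U = V + P + S - T - Q by rewrite -e !addrK.
by rewrite [LHS](ACl (2*5*3*4*1*6)) /= addrK addrA.
Qed.
End ZmodId.

Lemma pair_contl (T U : topologicalType) (a : T) : continuous (fun x : U => (a, x)).
Proof. by move=> x; apply: cvg_pair; [exact: cvg_cst | exact: cvg_id]. Qed.

Lemma pair_map_cont (T1 T2 U : topologicalType) (f : T1 -> U) :
  continuous f -> continuous (fun p : T1 * T2 => (f p.1, p.2)).
Proof.
move=> fc y; apply: cvg_pair; last exact: cvg_snd.
exact: (@continuous_comp _ _ _ fst f y cvg_fst (fc _)).
Qed.

Lemma sub_pair_cont (T : topologicalType) (M : topologicalZmodType) (f g : T -> M) :
  continuous f -> continuous g -> continuous (fun p => f p - g p).
Proof.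
move=> fc gc y.
apply: (@continuous_comp _ _ _ (fun p => (f p, g p)) (fun p : M * M => p.1 - p.2)); last exact: sub_continuous.
by apply: cvg_pair; [exact: fc | exact: gc].
Qed.


Theorem theorem6p6 (R : realType) (d : nat) (G : set ('rV[R]_d -> 'rV[R]_d))
    (hG : affine_group_with_translations G)
    (F : topologicalZmodType) (iota : Kbody R d -> F) (hF : free_hausdorff_group iota)
    (A : topologicalZmodType) (q : F -> A) (hq : CB_quotient G iota q)
    (D : R -> A -> A) (hD : is_dilation (q \o iota) D)
    (rho0 : A -> A) (rho : nat -> R -> A -> A) (hrho : dilation_components d D rho0 rho) :
  (forall (P : Kbody R d) (p : 'rV[R]_d), sval P = [set p] ->
     (forall x : A, CBi rho0 rho 0 x <-> exists n : int, x = q (iota P) *~ n) /\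
     injective (fun n : int => q (iota P) *~ n)) /\
  (forall i : nat, (1 <= i <= d)%N ->
     exists s : R -> A -> A,
       hausdorff_tvs_on (CBi rho0 rho i) s /\
       forall (lam : R) (X Y : Kbody R d), 0 <= lam ->
         sval Y = (fun v => lam *: v) @` sval X ->
         mcmullen rho0 rho i (q (iota Y)) = s (lam ^+ i) (mcmullen rho0 rho i (q (iota X)))).
Proof.
have Ah : hausdorff_space A := A_hausdorff hq.
case: (hq) => qB qs qo qk.
case: (hD) => Dc DB DPhi.
case: (hrho) => r0c rc radd rdec.
have Dcont : forall lam, 0 <= lam -> continuous (D lam).
  move=> lam l0.
  have gc : continuous (fun x : A => (lam, x)) := @pair_contl _ _ lam.
  exact: (@within_comp _ _ _ _ _ (fun x : A => (lam, x)) Dc gc (fun _ => l0)).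
have DD : forall lam mu x, 0 <= lam -> 0 <= mu -> D lam (D mu x) = D (lam * mu) x.
  move=> lam mu x l0 m0.
  apply: (hom_uniq hF hq Ah (f1 := fun x => D lam (D mu x)) (f2 := D (lam * mu))).
  - by move=> a b; rewrite !DB.
  - by move=> a b; rewrite DB // mulr_ge0.
  - by move=> a; apply: continuous_comp; [exact: Dcont | exact: Dcont].
  - exact: Dcont (mulr_ge0 l0 m0).
  - move=> X /=.
    have [Y hY] := scale_body mu X.
    have [Z hZ] := scale_body lam Y.
    rewrite (DPhi mu X Y m0 hY) (DPhi lam Y Z l0 hZ) (DPhi _ X Z (mulr_ge0 l0 m0)) //.
    rewrite hZ hY; apply/seteqP; split => v /=.
      by case=> _ [w Xw <-] <-; exists w => //; rewrite scalerA.
    by case=> w Xw <-; exists (mu *: w); [exists w | rewrite scalerA].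
have r0E := rho0E radd rdec.
have r0B := rho0B radd rdec DB.
have rB := rhoB radd rdec DB.
have rD := rhoD radd rdec DB.
have rDm := rho_D radd rdec DD.
have rr := rho_rho radd rdec DB DD.
have r0 := rho_at0 radd.
split.
  move=> P p hP.
  have PhiP : forall X, rho0 (q (iota X)) = q (iota P).
    move=> X; rewrite r0E.
    have [Y hY] := scale_body 0 X.
    rewrite (DPhi 0 X Y (lexx 0) hY).
    have Y0 : sval Y = [set 0].
      rewrite hY; case: X {hY} => X [[x Xx] _] /=.
      apply/seteqP; split => v /=; first by case=> w _ <-; rewrite scale0r.
      by move=> ->; exists x => //; rewrite scale0r.
    apply/eqP; rewrite eq_sym -subr_eq0 -qB; apply/eqP.
    have : (q @^-1` [set 0]) (iota P - iota Y).
      rewrite qk; apply: subset_closure => T T0 TB hS; apply: hS; right.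
      exists (fun v => v + (- p)), P, Y; split => //.
        by case: hG => _ _ _ _; apply.
      by rewrite Y0 hP image_set1 subrr.
    by [].
  have kc1 : Kcontinuous (fun _ : Kbody R d => (1 : zd)).
    by move=> X U nU; exists 1 => // Y _; exact: nbhs_singleton nU.
  case: (hF) => _ _ univ.
  have [g [[gB [gc gi]] _]] := univ zd zd_hausdorff _ kc1.
  have g1 : forall X, g (iota X) = 1 := fun X => congr1 (fun f => f X) gi.
  have gk : forall x, q x = 0 -> g x = 0.
    move=> x qx0.
    have : closure (gen_subgroup (CB_relations G iota)) x by rewrite -qk.
    have cZ : closed (g @^-1` [set 0]).
      apply: preimage_closed; last exact: discrete_closed.
      by move=> y _; exact: gc.
    move: cZ; rewrite closure_id => e hx.
    suff : (g @^-1` [set 0]) x by [].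
    rewrite e; apply: (closureS _ hx) => y hy; apply: hy.
    - exact: (af0 gB).
    - by move=> a b /= ha hb; rewrite gB ha hb subrr.
    move=> z [[B [C [U [I [_ _ ->]]]]] | [h [X [Y [_ _ ->]]]]] /=.
      by rewrite (afD gB) !gB !g1.
    by rewrite gB !g1 subrr.
  pose chi (a : A) : zd := g (proj1_sig (cid (qs a))).
  have chiq : forall x, chi (q x) = g x.
    move=> x; rewrite /chi; case: cid => y /= qy.
    apply/eqP; rewrite -subr_eq0 -gB; apply/eqP; apply: gk.
    by rewrite qB qy subrr.
  have chiB : forall a b, chi (a - b) = chi a - chi b.
    by move=> a b; have [x <-] := qs a; have [y <-] := qs b; rewrite -qB !chiq gB.
  have chic : continuous chi.
    apply/continuousP => U oU; apply/qo.
    have -> : q @^-1` (chi @^-1` U) = g @^-1` U.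
      by apply/seteqP; split => x /=; rewrite chiq.
    exact: (proj1 (continuousP g) gc U oU).
  have r0eq : forall a, rho0 a = q (iota P) *~ chi a.
    apply: (hom_uniq hF hq Ah (f1 := rho0) (f2 := fun a => q (iota P) *~ chi a)).
    - exact: r0B.
    - by move=> a b; rewrite chiB mulrzBr.
    - exact: r0c.
    - move=> a; apply: (@continuous_comp _ _ _ chi (fun n : zd => q (iota P) *~ n)).
        exact: chic.
      exact: zd_cont.
    - by move=> X; rewrite PhiP chiq g1.
  split.
    move=> x; split.
      by case=> y _ <-; exists (chi y); rewrite /mcmullen /= r0eq.
    case=> n ->; exists (q (iota P) *~ n) => //.
    by rewrite /mcmullen /= (afMz r0B) PhiP.
  move=> m n /= e.
  have := congr1 chi e; rewrite !(afMz chiB) chiq g1.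
  by rewrite !intz.
move=> i hi.
have i0 : (i == 0%N) = false by case: i hi.
have mcE : forall x, mcmullen rho0 rho i x = rho i 1 x by move=> x; rewrite /mcmullen i0.
have rsum3 : forall a b c x, 0 <= a -> 0 <= b -> 0 <= c ->
    rho i (a + b + c) x = rho i a x + rho i b x + rho i c x.
  by move=> a b c x a0 b0 c0; rewrite !radd // addr_ge0.
pose s := fun (a : R) (x : A) => rho i (pp a) x - rho i (nn a) x.
exists s; split; last first.
  move=> lam X Y l0 hY; have /= <- := DPhi lam X Y l0 hY; rewrite !mcE rDm // mul1r /s.
  by rewrite pp_id ?exprn_ge0 // nn_0 ?exprn_ge0 // !rr ?exprn_ge0 // eqxx mulr1 mul0r r0 // subr0.
have ppg := @pp_ge0 R; have nng := @nn_ge0 R.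
split.
- split.
    move=> a x [z _ <-]; rewrite mcE.
    exists (rho i (pp a) z - rho i (nn a) z) => //.
    by rewrite mcE /s rB // !rr // eqxx !mul1r !mulr1.
  move=> a b x _; rewrite /s !rB // !rr // eqxx.
  apply: zm_i; rewrite -!rsum3 ?mulr_ge0 //; congr (rho i _ x).
  have ea := ppnn a; have eb := ppnn b; have eab := ppnn (a * b).
  nra.
- split.
    by move=> x [z _ <-]; rewrite mcE /s pp_id // nn_0 // rr // eqxx mul1r r0 // subr0.
  by move=> a x y _ _; rewrite /s !rD // opprD addrACA.
- move=> a b x _; rewrite /s; apply: zm_ii; rewrite -!rsum3 //; congr (rho i _ x).
  have ea := ppnn a; have eb := ppnn b; have eab := ppnn (a + b).
  lra.
- apply: continuous_subspaceT.
  have g1 : continuous (fun p : R * A => (pp p.1, p.2)) := pair_map_cont (@pp_cont R).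
  have g2 : continuous (fun p : R * A => (nn p.1, p.2)) := pair_map_cont (@nn_cont R).
  have c1 := @within_comp _ _ _ _ _ _ (rc i hi) g1 (fun p => pp_ge0 p.1).
  have c2 := @within_comp _ _ _ _ _ _ (rc i hi) g2 (fun p => nn_ge0 p.1).
  exact: (sub_pair_cont c1 c2).
- move=> x y _ _ nxy.
  move: Ah; rewrite open_hausdorff => /(_ x y) [].
    by apply/eqP.
  move=> [U W] /= [xU yW] [oU oW /eqP UW].
  by exists U, W; split => //; rewrite -inE.
Qed.
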